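(* Let $\mathcal S=\{s_1,\dots,s_k\}\subseteq\Sigma^n$ be a set of pairwise matching strings and let $s^*\in\Sigma^n$ be a string matching every string of $\mathcal S$. Then for every $i\in[1..k]$, $\partial_S(s^*,s_i) = \partial_{Ham}(h_{s_1,s^*}, h_{s_1,s_i})$.
   Context: The swap at position $p$ exchanges the letters at positions $p$ and $p+1$. A swap permutation is a set of swaps at positions pairwise differing by at least $2$. Two strings of length $n$ are matching if some swap permutation transforms one into the other. For matching strings $u,v$, there is a unique valid swap permutation (one never swapping two identical letters) from $u$ to $v$; $h_{u,v}$ is its swap string, the binary string of length $n-1$ with $h_{u,v}[p]=1$ iff it swaps $(p,p+1)$. The swap distance $\partial_S(u,v)$ is $+\infty$ if $u,v$ are not matching, and otherwise the number of swaps in the valid swap permutation from $u$ to $v$ (the number of $1$s in $h_{u,v}$). $\partial_{Ham}$ is the Hamming distance. *)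

(* Defs.v *)
(* Strings are sequences over an alphabet Sigma : eqType;
   positions are 0-based naturals. *)
From mathcomp Require Import all_boot.
From Stdlib Require Import ClassicalEpsilon.
Set Implicit Arguments. Unset Strict Implicit. Unset Printing Implicit Defensive.

Section Swaps.
Variable Sigma : eqType.

(* a swap string h (bit p = 1 iff the swap at position p, exchanging p and p+1,
   is performed) describes a swap permutation iff no two swaps are adjacent
   (positions of swaps pairwise differ by at least 2). *)
Definition swap_perm (h : bitseq) : Prop :=
  forall p, nth false h p -> ~~ nth false h p.+1.

(* position of u whose letter lands at position p of the result *)
Definition swap_src (h : bitseq) (p : nat) : nat :=
  if nth false h p then p.+1
  else if (0 < p) && nth false h p.-1 then p.-1 else p.

Definition transforms (h : bitseq) (u v : seq Sigma) : Prop :=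
  [/\ size v = size u, size h = (size u).-1, swap_perm h &
      forall p, p < size u -> onth v p = onth u (swap_src h p)].

Definition valid_swaps (h : bitseq) (u : seq Sigma) : Prop :=
  forall p, nth false h p -> onth u p != onth u p.+1.

Definition matching (u v : seq Sigma) : Prop := exists h, transforms h u v.

(* h_{u,v}: the (unique, for matching u v) valid swap permutation from u to v *)
Definition swap_string (u v : seq Sigma) : bitseq :=
  epsilon (inhabits [::]) (fun h => transforms h u v /\ valid_swaps h u).

(* swap distance; None stands for +infinity *)
Definition swap_dist (u v : seq Sigma) : option nat :=
  if excluded_middle_informative (matching u v)
  then Some (count id (swap_string u v)) else None.
End Swaps.

Definition hamming (a b : bitseq) : nat :=
  count id [seq x.1 != x.2 | x <- zip a b].

(* Main.v *)
Require Import Defs.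
From mathcomp Require Import all_boot.
From Stdlib Require Import ClassicalEpsilon.
Set Implicit Arguments. Unset Strict Implicit. Unset Printing Implicit Defensive.

Section S.
Variable Sigma : eqType.
Implicit Types u v : seq Sigma.

Lemma nth_size_lt (h : bitseq) q : nth false h q -> q < size h.
Proof. by apply: contraTT; rewrite -leqNgt => /(nth_default _) ->. Qed.

Lemma L_sw h u v q : transforms h u v -> nth false h q -> onth v q = onth u q.+1.
Proof.
case=> _ sh _ E hq. have := nth_size_lt hq; rewrite sh => lq.
have lq' : q.+1 < size u by move: lq; case: (size u).
by rewrite E ?(ltnW lq') // /swap_src hq.
Qed.

Lemma L_back h u v q : transforms h u v -> nth false h q -> onth v q.+1 = onth u q.
Proof.
case=> _ sh sp E hq. have := nth_size_lt hq; rewrite sh => lq.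
rewrite E /swap_src /=; last by move: lq; case: (size u).
by rewrite (negbTE (sp _ hq)) hq.
Qed.

Lemma L_id h u v p : transforms h u v -> p < size u -> ~~ nth false h p ->
  ~~ ((0 < p) && nth false h p.-1) -> onth v p = onth u p.
Proof.
case=> _ _ _ E lp n1 n2. by rewrite E // /swap_src (negbTE n1) (negbTE n2).
Qed.

Lemma src_inv h p : swap_perm h -> swap_src h (swap_src h p) = p.
Proof.
move=> sp; rewrite /swap_src.
case hp: (nth false h p).
  by rewrite (negbTE (sp _ hp)) /= hp.
case: p hp => [|q] hp //=; first by rewrite hp.
case hq: (nth false h q) => /=; first by rewrite hq.
by rewrite hp hq.
Qed.

Lemma src_lt h u p : size h = (size u).-1 -> p < size u -> swap_src h p < size u.
Proof.
move=> sh lp; rewrite /swap_src.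
case hp: (nth false h p).
  by have := nth_size_lt hp; rewrite sh; case: (size u).
case: ifP => // _; apply: leq_ltn_trans lp; exact: leq_pred.
Qed.

Lemma transforms_sym h u v : transforms h u v -> transforms h v u.
Proof.
case=> s sh sp E; split => //; first by rewrite s.
move=> p lp; rewrite s in lp.
by rewrite E ?src_inv // src_lt.
Qed.

End S.

Section S.
Variable Sigma : eqType.
Implicit Types u v : seq Sigma.

Definition vfix (h : bitseq) u : bitseq :=
  mkseq (fun p => nth false h p && (onth u p != onth u p.+1)) (size h).

Lemma nth_vfix h u p :
  nth false (vfix h u) p = nth false h p && (onth u p != onth u p.+1).
Proof.
rewrite /vfix; case: (ltnP p (size h)) => lp; first by rewrite nth_mkseq.
by rewrite !nth_default ?size_mkseq.
Qed.

Lemma vfix_ok h u v : transforms h u v -> transforms (vfix h u) u v /\ valid_swaps (vfix h u) u.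
Proof.
case=> s sh sp E; split; last by move=> p; rewrite nth_vfix => /andP[].
split => //; first by rewrite size_mkseq.
  by move=> p; rewrite !nth_vfix => /andP[/sp /negbTE ->].
move=> p lp; rewrite E // /swap_src !nth_vfix.
case hp: (nth false h p) => /=.
  case: eqVneq => //= e.
  case: p lp hp e => [|q] lp hp e //=.
  by have := sp q; rewrite hp; case: (nth false h q) => //= /(_ isT).
case: p lp hp => [|q] lp hp //=.
case hq: (nth false h q) => //=.
by case: eqVneq.
Qed.

Lemma matching_valid u v : matching u v ->
  transforms (swap_string u v) u v /\ valid_swaps (swap_string u v) u.
Proof.
case=> h /vfix_ok H; rewrite /swap_string.
apply: (epsilon_spec (inhabits [::]) (fun h => transforms h u v /\ valid_swaps h u)).
by exists (vfix h u).
Qed.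

End S.

Section S.
Local Arguments onth : simpl never.
Variable Sigma : eqType.
Implicit Types u v : seq Sigma.

Lemma facts_p h u v p : transforms h u v -> valid_swaps h u -> p.+1 < size u ->
  [/\ nth false h p -> onth v p = onth u p.+1,
      nth false h p = false -> onth v p = onth u p \/ (0 < p /\ nth false h p.-1) &
      nth false h p -> onth u p <> onth u p.+1].
Proof.
move=> T V lp; split.
- exact: L_sw T.
- move=> hp; case hq: ((0 < p) && nth false h p.-1).
    by right; move/andP: hq.
  by left; apply: (L_id T) => //; [exact: ltnW | rewrite hp | rewrite hq].
- by move=> /V /eqP.
Qed.

Lemma facts_q h u v q : transforms h u v -> valid_swaps h u ->
  [/\ nth false h q -> onth v q.+1 = onth u q,
      nth false h q -> onth v q = onth u q.+1,
      nth false h q -> nth false h q.+1 = false &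
      nth false h q -> onth u q <> onth u q.+1].
Proof.
move=> T V; split.
- exact: L_back T.
- exact: L_sw T.
- by case: T => _ _ sp _ /sp /negbTE.
- by move=> /V /eqP.
Qed.

Ltac clean := repeat match goal with
  | H : is_true true -> _ |- _ => specialize (H isT)
  | H : true = false -> _ |- _ => clear H
  | H : false = false -> _ |- _ => specialize (H erefl)
  | H : is_true false -> _ |- _ => clear H
  | H : _ \/ (is_true (0 < 0) /\ _) |- _ => destruct H as [H|[H _]]; [|discriminate H]
  | H : _ \/ (is_true (0 < 0) /\ _) |- _ => destruct H as [H|[H _]]; [|discriminate H]
  | H : _ \/ (is_true (0 < _) /\ is_true false) |- _ => destruct H as [H|[_ H]]; [|discriminate H]
  | H : _ \/ (is_true (0 < _) /\ is_true true) |- _ => clear H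
  end.

Lemma xor_key h1 h2 h3 (x y z : seq Sigma) :
  transforms h1 x y -> valid_swaps h1 x ->
  transforms h2 x z -> valid_swaps h2 x ->
  transforms h3 y z -> valid_swaps h3 y ->
  forall p, nth false h3 p = xorb (nth false h1 p) (nth false h2 p).
Proof.
move=> T1 V1 T2 V2 T3 V3.
have sy : size y = size x by case: T1.
have s1 : size h1 = (size x).-1 by case: T1.
have s2 : size h2 = (size x).-1 by case: T2.
have s3 : size h3 = (size x).-1 by case: T3; rewrite sy.
have big : forall p, ~~ (p.+1 < size x) ->
    nth false h3 p = xorb (nth false h1 p) (nth false h2 p).
  move=> p; rewrite -leqNgt => lp.
  have lp' : (size x).-1 <= p by move: lp; case: (size x).
  by rewrite !nth_default ?s1 ?s2 ?s3.
elim=> [|q IH].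
  case: (ltnP 1 (size x)) => [lp|lp]; last by apply: big; rewrite -leqNgt.
  have [A1 B1 C1] := facts_p T1 V1 lp.
  have [A2 B2 C2] := facts_p T2 V2 lp.
  have [A3 B3 C3] := facts_p T3 V3 (ltac:(by rewrite sy) : 1 < size y).
  move: A1 B1 C1 A2 B2 C2 A3 B3 C3.
  case: (nth false h1 0); case: (nth false h2 0); case: (nth false h3 0) => /=
    A1 B1 C1 A2 B2 C2 A3 B3 C3; clean; first [reflexivity | exfalso; congruence].
case: (ltnP q.+2 (size x)) => [lp|lp]; last by apply: big; rewrite -leqNgt.
have [A1 B1 C1] := facts_p T1 V1 lp.
have [A2 B2 C2] := facts_p T2 V2 lp.
have [A3 B3 C3] := facts_p T3 V3 (ltac:(by rewrite sy) : q.+2 < size y).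
have [D1 E1 F1 G1] := facts_q q T1 V1.
have [D2 E2 F2 G2] := facts_q q T2 V2.
have [D3 E3 F3 G3] := facts_q q T3 V3.
move: IH A1 B1 C1 A2 B2 C2 A3 B3 C3 D1 E1 F1 G1 D2 E2 F2 G2 D3 E3 F3 G3 => /=.
case: (nth false h1 q); case: (nth false h2 q); case: (nth false h3 q);
case: (nth false h1 q.+1); case: (nth false h2 q.+1); case: (nth false h3 q.+1) => /=
  IH A1 B1 C1 A2 B2 C2 A3 B3 C3 D1 E1 F1 G1 D2 E2 F2 G2 D3 E3 F3 G3; clean;
  first [reflexivity | exfalso; congruence].
Qed.

End S.

Theorem mainTheorem3 (Sigma : eqType) (n k : nat) (s : nat -> seq Sigma)
    (sstar : seq Sigma) :
  (forall i, 1 <= i <= k -> size (s i) = n) ->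
  (forall i j, 1 <= i <= k -> 1 <= j <= k -> s i = s j -> i = j) ->
  (forall i j, 1 <= i <= k -> 1 <= j <= k -> matching (s i) (s j)) ->
  size sstar = n ->
  (forall i, 1 <= i <= k -> matching sstar (s i)) ->
  forall i, 1 <= i <= k ->
    swap_dist sstar (s i) =
    Some (hamming (swap_string (s 1) sstar) (swap_string (s 1) (s i))).
Proof.
move=> _ _ Mss _ Ms i ik.
have k1 : 1 <= 1 <= k by case/andP: ik => a b; rewrite leqnn (leq_trans a b).
have Myz := Ms i ik.
have Mxz := Mss 1 i k1 ik.
have Mxy : matching (s 1) sstar.
  by case: (Ms 1 k1) => h /transforms_sym T; exists h.
have [T1 V1] := matching_valid Mxy.
have [T2 V2] := matching_valid Mxz.
have [T3 V3] := matching_valid Myz.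
have K := xor_key T1 V1 T2 V2 T3 V3.
rewrite /swap_dist; case: (excluded_middle_informative (matching sstar (s i))) => [m|NM]; last by case: (NM Myz).
congr Some; rewrite /hamming; congr count.
have sy : size sstar = size (s 1) by case: T1.
have s1 : size (swap_string (s 1) sstar) = (size (s 1)).-1 by case: T1.
have s2 : size (swap_string (s 1) (s i)) = (size (s 1)).-1 by case: T2.
have s3 : size (swap_string sstar (s i)) = (size (s 1)).-1 by case: T3; rewrite sy.
apply: (@eq_from_nth _ false).
  by rewrite size_map size_zip s1 s2 s3 minnn.
move=> p; rewrite s3 => lp.
rewrite (nth_map (false, false)); last by rewrite size_zip s1 s2 minnn.
rewrite nth_zip ?s1 ?s2 // K /=.
by case: (nth false _ p); case: (nth false _ p).
Qed.
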